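(* Let $0<\epsilon\le 1$, $r>0$ be constants, $p_2=\frac{1-\epsilon}{n}$, $p_3=\frac{r}{n\ln n}$ (so $p_2=0$ when $\epsilon=1$), and $K_0=\max\{1,\tfrac{2(9+\epsilon)}{r}\}$. For any two distinct vertices $v_1,v_2$ of $\mathbb{G}(n,p_2,p_3)$, $$\Pr\big[|C_{\{v_1,v_2\}}|\ge K_0\ln n\big]\le n^{I_{\epsilon,r}+o(1)}\qquad(n\to\infty),$$ where $I_{\epsilon,r}=\int_0^{\epsilon/r}[1-\lambda(\omega)+\ln\lambda(\omega)]d\omega=-\frac1r\big[\epsilon-\frac{\epsilon^2}{2}+(1-\epsilon)\ln(1-\epsilon)\big]$ (with $(1-\epsilon)\ln(1-\epsilon)=0$ for $\epsilon=1$) and $\lambda(x)=1-\epsilon+rx$.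
   Context: $\mathbb{G}(n,p_2,p_3)$ is the random hypergraph on a vertex set $V$ with $|V|=n$ in which each of the $\binom n2$ possible 2-element edges is present with probability $p_2$ and each of the $\binom n3$ possible 3-element hyperedges is present with probability $p_3$, all independently. Propagation process from a set of vertices: one maintains a set $\mathcal{Y}_t$ of active vertices and a set $\mathcal{D}_t$ of inactive vertices; vertices in neither set are unexplored. At time $t=0,1,2,\dots$, while $\mathcal{Y}_t\neq\emptyset$, pick an active vertex $v_t\in\mathcal{Y}_t$ and let $U_t$ be the set of unexplored vertices $u$ such that $\{v_t,u\}$ is a 2-edge or $\{v_t,u,w\}$ is a 3-edge for some $w\in\mathcal{D}_t$; set $\mathcal{Y}_{t+1}=(\mathcal{Y}_t\cup U_t)\setminus\{v_t\}$ and $\mathcal{D}_{t+1}=\mathcal{D}_t\cup\{v_t\}$. The process stops at $T=\min\{t:\mathcal{Y}_t=\emptyset\}$. $C_{\{v_1,v_2\}}$ denotes $\mathcal{D}_T$ for the process started from $\mathcal{Y}_0=\{v_1,v_2\}$, $\mathcal{D}_0=\emptyset$, so $|C_{\{v_1,v_2\}}|=T$. *)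

(* Defs.v *)
From Stdlib Require Import Reals Lra Arith List.
Import ListNotations.
Open Scope R_scope.

(** Vertices of G(n,p2,p3) are 0..n-1.  A (hyper)edge is encoded by the
    increasingly sorted list of its vertices. *)

Fixpoint ins (a : nat) (l : list nat) : list nat :=
  match l with
  | [] => [a]
  | b :: t => if Nat.leb a b then a :: b :: t else b :: ins a t
  end.

Fixpoint srt (l : list nat) : list nat :=
  match l with [] => [] | a :: t => ins a (srt t) end.

Definition pairs (n : nat) : list (list nat) :=
  flat_map (fun j => map (fun i => [i; j]) (seq 0 j)) (seq 0 n).

Definition triples (n : nat) : list (list nat) :=
  flat_map (fun k => flat_map (fun j => map (fun i => [i; j; k]) (seq 0 j)) (seq 0 k))
           (seq 0 n).

Definition hgraph := list nat -> bool.

Definition upd (H : hgraph) (e : list nat) (b : bool) : hgraph :=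
  fun a => if list_eq_dec Nat.eq_dec a e then b else H a.

(** Probability of a (boolean) event on hypergraphs when each item (e,p)
    of the list is independently present with probability p (items not in
    the list are absent). *)
Fixpoint prob_aux (its : list (list nat * R)) (acc : hgraph)
         (ev : hgraph -> bool) : R :=
  match its with
  | [] => if ev acc then 1 else 0
  | (e, p) :: t => p * prob_aux t (upd acc e true) ev
                   + (1 - p) * prob_aux t (upd acc e false) ev
  end.

Definition Gprob (n : nat) (p2 p3 : R) (ev : hgraph -> bool) : R :=
  prob_aux (map (fun e => (e, p2)) (pairs n) ++ map (fun e => (e, p3)) (triples n))
           (fun _ => false) ev.

(** Propagation process.  States are (Y, D) = (active, inactive) vertex sets
    given as predicates.  [sel Y D] is the rule used to pick the active
    vertex v_t (arbitrary, subject to validity). *)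
Definition selector := (nat -> bool) -> (nat -> bool) -> nat.

Definition valid_sel (n : nat) (sel : selector) : Prop :=
  forall Y D : nat -> bool, (exists u, (u < n)%nat /\ Y u = true) ->
    (sel Y D < n)%nat /\ Y (sel Y D) = true.

Definition step (n : nat) (H : hgraph) (sel : selector)
           (Y D : nat -> bool) : (nat -> bool) * (nat -> bool) :=
  let v := sel Y D in
  let U := fun u => (Nat.ltb u n && negb (Y u) && negb (D u) &&
             (H (srt [v; u]) ||
              existsb (fun w => D w && H (srt [v; u; w])) (seq 0 n)))%bool in
  (fun u => ((Y u || U u) && negb (Nat.eqb u v))%bool,
   fun u => (D u || Nat.eqb u v)%bool).

(** Runs the process, counting steps; returns T = min{t : Y_t = empty}
    (fuel n+1 suffices since each step moves one vertex into D). *)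
Fixpoint run (n : nat) (H : hgraph) (sel : selector) (fuel : nat)
         (Y D : nat -> bool) (t : nat) : nat :=
  match fuel with
  | O => t
  | S f => if existsb Y (seq 0 n)
           then let YD := step n H sel Y D in run n H sel f (fst YD) (snd YD) (S t)
           else t
  end.

(** |C_{v1,v2}| = T for the process started from Y_0 = {v1,v2}, D_0 = {}. *)
Definition comp_size (n : nat) (H : hgraph) (sel : selector) (v1 v2 : nat) : nat :=
  run n H sel (S n) (fun u => (Nat.eqb u v1 || Nat.eqb u v2)%bool) (fun _ => false) O.

Definition p2 (eps : R) (n : nat) : R := (1 - eps) / INR n.
Definition p3 (r : R) (n : nat) : R := r / (INR n * ln (INR n)).
Definition K0 (eps r : R) : R := Rmax 1 (2 * (9 + eps) / r).

(** I_{eps,r} in closed form; note Stdlib's [ln 0 = 0], so the term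
    (1-eps) ln(1-eps) is 0 for eps = 1, as in the paper's convention. *)
Definition Ier (eps r : R) : R :=
  - (1 / r) * (eps - eps ^ 2 / 2 + (1 - eps) * ln (1 - eps)).

Definition big_event (eps r : R) (n : nat) (sel : selector) (v1 v2 : nat)
  : hgraph -> bool :=
  fun H => if Rle_dec (K0 eps r * ln (INR n)) (INR (comp_size n H sel v1 v2))
           then true else false.

(* Main.v *)
Require Import Defs.
From Stdlib Require Import Reals Lra Lia List Permutation FunctionalExtensionality Bool ZArith.
Import ListNotations.
Open Scope R_scope.


Fixpoint PA (its : list (list nat * R)) (acc : hgraph) (F : hgraph -> R) : R :=
  match its with
  | [] => F acc
  | (e, p) :: t => p * PA t (upd acc e true) F + (1 - p) * PA t (upd acc e false) F
  end.

Lemma prob_aux_PA : forall its acc ev,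
  prob_aux its acc ev = PA its acc (fun H => if ev H then 1 else 0).
Proof. induction its as [|[e p] t IH]; intros; simpl; auto. rewrite !IH; auto. Qed.

Definition probs_ok (l : list (list nat * R)) := forall it, In it l -> 0 <= snd it <= 1.

Lemma probs_ok_tl : forall a l, probs_ok (a :: l) -> probs_ok l.
Proof. unfold probs_ok; simpl; auto. Qed.

Lemma PA_ext_out : forall l acc F G,
  (forall H, (forall e, ~ In e (map fst l) -> H e = acc e) -> F H = G H) ->
  PA l acc F = PA l acc G.
Proof.
  induction l as [|[e p] t IH]; simpl; intros acc F G HFG.
  - apply HFG; auto.
  - assert (A : forall b, PA t (upd acc e b) F = PA t (upd acc e b) G).
    { intro b; apply IH; intros H' HH; apply HFG; intros e' He';
      rewrite HH by tauto; unfold upd; destruct (list_eq_dec Nat.eq_dec e' e);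
      [subst; tauto | auto]. }
    rewrite !A; auto.
Qed.

Lemma PA_le_out : forall l acc F G, probs_ok l ->
  (forall H, (forall e, ~ In e (map fst l) -> H e = acc e) -> F H <= G H) ->
  PA l acc F <= PA l acc G.
Proof.
  induction l as [|[e p] t IH]; simpl; intros acc F G Hp HFG.
  - apply HFG; auto.
  - assert (Hp0 := Hp (e,p) (or_introl eq_refl)); simpl in Hp0.
    assert (Hpt := probs_ok_tl _ _ Hp).
    assert (A : forall b, PA t (upd acc e b) F <= PA t (upd acc e b) G).
    { intro b; apply IH; auto; intros H' HH; apply HFG; intros e' He';
      rewrite HH by tauto; unfold upd; destruct (list_eq_dec Nat.eq_dec e' e);
      [subst; tauto | auto]. }
    pose proof (A true); pose proof (A false).
    apply Rplus_le_compat; apply Rmult_le_compat_l; lra.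
Qed.

Lemma PA_acc_irrel : forall l acc acc' F,
  (forall e, ~ In e (map fst l) -> acc e = acc' e) -> PA l acc F = PA l acc' F.
Proof.
  induction l as [|[e p] t IH]; simpl; intros acc acc' F Hacc.
  - replace acc' with acc; auto. extensionality x.
    apply Hacc; auto.
  - assert (A : forall b, PA t (upd acc e b) F = PA t (upd acc' e b) F).
    { intro b; apply IH; intros e' He'; unfold upd;
      destruct (list_eq_dec Nat.eq_dec e' e); auto; apply Hacc; intros [Heq|Hin]; [congruence|tauto]. }
    rewrite !A; auto.
Qed.

Lemma PA_scale : forall l acc c F, PA l acc (fun H => c * F H) = c * PA l acc F.
Proof. induction l as [|[e p] t IH]; simpl; intros; auto. rewrite !IH; ring. Qed.

Lemma PA_const : forall l acc c, PA l acc (fun _ => c) = c.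
Proof. induction l as [|[e p] t IH]; simpl; intros; auto. rewrite !IH; ring. Qed.

Lemma PA_app : forall l1 l2 acc F, PA (l1 ++ l2) acc F = PA l1 acc (fun a => PA l2 a F).
Proof. induction l1 as [|[e p] t IH]; simpl; intros; auto. rewrite !IH; auto. Qed.

Lemma upd_comm : forall acc e1 e2 b1 b2, e1 <> e2 ->
  upd (upd acc e1 b1) e2 b2 = upd (upd acc e2 b2) e1 b1.
Proof.
  intros; extensionality x; unfold upd.
  destruct (list_eq_dec Nat.eq_dec x e2); destruct (list_eq_dec Nat.eq_dec x e1); subst; auto.
  tauto.
Qed.

Lemma PA_perm : forall l l', Permutation l l' -> NoDup (map fst l) ->
  forall acc F, PA l acc F = PA l' acc F.
Proof.
  intros l l' HP; induction HP; intros HN acc F.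
  - auto.
  - destruct x as [e p]; simpl in *. inversion HN; subst. rewrite !IHHP; auto.
  - destruct x as [e1 p1]; destruct y as [e2 p2']; simpl in *.
    inversion HN as [|? ? Hn1 HN1]; subst. simpl in Hn1.
    assert (e2 <> e1) by (intro Heq; apply Hn1; left; congruence).
    rewrite !(upd_comm _ e2 e1) by auto. ring.
  - rewrite IHHP1 by auto. apply IHHP2.
    apply (Permutation_NoDup (Permutation_map fst HP1)); auto.
Qed.

Definition mk (pr : list nat -> R) (L : list (list nat)) := map (fun e => (e, pr e)) L.

Lemma map_fst_mk : forall pr L, map fst (mk pr L) = L.
Proof. intros; unfold mk; rewrite map_map; simpl; apply map_id. Qed.

Lemma probs_ok_mk : forall pr L, (forall e, 0 <= pr e <= 1) -> probs_ok (mk pr L).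
Proof. unfold probs_ok, mk; intros pr L H it Hit. apply in_map_iff in Hit.
  destruct Hit as [e [<- _]]; simpl; auto. Qed.

Definition ldec := list_eq_dec Nat.eq_dec.

Lemma PA_dedup : forall pr L acc F,
  PA (mk pr (nodup ldec L)) acc F = PA (mk pr L) acc F.
Proof.
  induction L as [|a L IH]; intros acc F; simpl; auto.
  destruct (in_dec ldec a L) as [Hin|Hin].
  - rewrite IH. simpl.
    rewrite (PA_acc_irrel _ (upd acc a true) acc), (PA_acc_irrel _ (upd acc a false) acc).
    + ring.
    + intros e He; rewrite map_fst_mk in He; unfold upd; destruct (list_eq_dec Nat.eq_dec e a); subst; tauto.
    + intros e He; rewrite map_fst_mk in He; unfold upd; destruct (list_eq_dec Nat.eq_dec e a); subst; tauto.
  - simpl. rewrite !IH. auto.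
Qed.

Definition cntE (L : list (list nat)) (H : hgraph) : nat := length (filter H L).

Definition prodf (pr : list nat -> R) (th : R) (L : list (list nat)) : R :=
  fold_right (fun e x => (pr e * exp th + (1 - pr e)) * x) 1 L.

Definition sumpr (pr : list nat -> R) (L : list (list nat)) : R :=
  fold_right (fun e x => pr e + x) 0 L.

Lemma PA_prod : forall pr th L, NoDup L -> forall acc,
  PA (mk pr L) acc (fun H => exp (th * INR (cntE L H))) = prodf pr th L.
Proof.
  induction L as [|e L IH]; intros HN acc; simpl.
  - unfold cntE; simpl. rewrite Rmult_0_r, exp_0; auto.
  - inversion HN; subst.
    rewrite (PA_ext_out _ (upd acc e true) _ (fun H => exp th * exp (th * INR (cntE L H)))).
    2:{ intros H HH. unfold cntE; simpl. rewrite HH by (rewrite map_fst_mk; auto).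
        unfold upd; destruct (list_eq_dec Nat.eq_dec e e) as [_|]; [|tauto].
        simpl length. rewrite S_INR, <- exp_plus. f_equal; ring. }
    rewrite (PA_ext_out _ (upd acc e false) _ (fun H => exp (th * INR (cntE L H)))).
    2:{ intros H HH. unfold cntE; simpl. rewrite HH by (rewrite map_fst_mk; auto).
        unfold upd; destruct (list_eq_dec Nat.eq_dec e e) as [_|]; [|tauto]. auto. }
    rewrite PA_scale, !IH by auto. ring.
Qed.

Lemma prodf_le : forall pr th L, (forall e, 0 <= pr e <= 1) -> 0 <= th ->
  prodf pr th L <= exp ((exp th - 1) * sumpr pr L).
Proof.
  induction L as [|e L IH]; intros Hpr Hth; simpl.
  - rewrite Rmult_0_r, exp_0; lra.
  - replace ((exp th - 1) * (pr e + sumpr pr L)) with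
      (pr e * (exp th - 1) + (exp th - 1) * sumpr pr L) by ring.
    rewrite exp_plus. pose proof (exp_pos th). pose proof (Hpr e).
    assert (1 <= exp th) by (rewrite <- exp_0; destruct Hth; [left; apply exp_increasing; auto|subst; lra]).
    apply Rmult_le_compat.
    + nra.
    + clear IH. induction L; simpl; [lra|]. pose proof (Hpr a). apply Rmult_le_pos; [nra|auto].
    + pose proof (exp_ineq1_le (pr e * (exp th - 1))). lra.
    + apply IH; auto.
Qed.
Open Scope bool_scope.

Lemma ins_perm : forall a l, Permutation (ins a l) (a :: l).
Proof.
  induction l as [|b t IH]; simpl; auto.
  destruct (Nat.leb a b); auto.
  eapply perm_trans; [apply perm_skip, IH|apply perm_swap].
Qed.

Lemma srt_perm : forall l, Permutation (srt l) l.
Proof.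
  induction l as [|a t IH]; simpl; auto.
  eapply perm_trans; [apply ins_perm|auto].
Qed.

Lemma filter_perm_len : forall (f : nat -> bool) l l', Permutation l l' ->
  length (filter f l) = length (filter f l').
Proof.
  intros f l l' HP; induction HP; simpl; auto.
  - destruct (f x); simpl; auto.
  - destruct (f x), (f y); simpl; auto.
  - congruence.
Qed.

Lemma srt_inj : forall l1 l2, srt l1 = srt l2 -> Permutation l1 l2.
Proof.
  intros l1 l2 H. eapply perm_trans; [apply Permutation_sym, srt_perm|].
  rewrite H; apply srt_perm.
Qed.

Lemma srt_len : forall l, length (srt l) = length l.
Proof. intros; apply Permutation_length, srt_perm. Qed.

Lemma pair_in : forall i j n, (i < j < n)%nat -> In [i;j] (pairs n).
Proof.
  intros i j n H; unfold pairs; apply in_flat_map; exists j; split.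
  - apply in_seq; lia.
  - apply in_map_iff; exists i; split; auto; apply in_seq; lia.
Qed.

Lemma triple_in : forall i j k n, (i < j < k /\ k < n)%nat -> In [i;j;k] (triples n).
Proof.
  intros i j k n H; unfold triples; apply in_flat_map; exists k; split.
  - apply in_seq; lia.
  - apply in_flat_map; exists j; split; [apply in_seq; lia|].
    apply in_map_iff; exists i; split; auto; apply in_seq; lia.
Qed.

Lemma srt2_univ : forall a b n, a <> b -> (a < n)%nat -> (b < n)%nat ->
  In (srt [a;b]) (pairs n).
Proof.
  intros; simpl. destruct (Nat.leb_spec a b); apply pair_in; lia.
Qed.

Ltac leb_cases :=
  repeat (simpl; match goal with |- context [Nat.leb ?x ?y] => destruct (Nat.leb_spec x y) end).

Lemma srt3_univ : forall a b c n, a <> b -> a <> c -> b <> c ->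
  (a < n)%nat -> (b < n)%nat -> (c < n)%nat -> In (srt [a;b;c]) (triples n).
Proof.
  intros. leb_cases; apply triple_in; lia.
Qed.

Lemma pairs_len : forall n e, In e (pairs n) -> length e = 2%nat.
Proof.
  unfold pairs; intros n e H. apply in_flat_map in H. destruct H as [j [_ H]].
  apply in_map_iff in H. destruct H as [i [<- _]]; auto.
Qed.

Lemma triples_len : forall n e, In e (triples n) -> length e = 3%nat.
Proof.
  unfold triples; intros n e H. apply in_flat_map in H. destruct H as [k [_ H]].
  apply in_flat_map in H. destruct H as [j [_ H]].
  apply in_map_iff in H. destruct H as [i [<- _]]; auto.
Qed.

Lemma filter_mono_len : forall (a b : nat -> bool) l, (forall x, a x = true -> b x = true) ->
  (length (filter a l) <= length (filter b l))%nat.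
Proof.
  induction l as [|x t IH]; simpl; intros Hab; auto.
  specialize (IH Hab). destruct (a x) eqn:E.
  - rewrite (Hab x E); simpl; lia.
  - destruct (b x); simpl; lia.
Qed.

Lemma filter_remove_lt : forall (P : nat -> bool) v l, In v l -> P v = true ->
  (length (filter (fun x => P x && negb (Nat.eqb x v)) l) + 1 <= length (filter P l))%nat.
Proof.
  induction l as [|x t IH]; simpl; intros Hin HP; [tauto|].
  destruct (Nat.eqb_spec x v).
  - subst. rewrite HP, andb_false_r; simpl.
    assert (length (filter (fun x => P x && negb (Nat.eqb x v)) t) <= length (filter P t))%nat.
    { apply filter_mono_len; intros x Hx; apply andb_true_iff in Hx; tauto. }
    lia.
  - destruct Hin as [Hin|Hin]; [congruence|].
    specialize (IH Hin HP). rewrite andb_true_r. destruct (P x); simpl; lia.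
Qed.

Lemma filter_or_le : forall (a b : nat -> bool) l,
  (length (filter (fun x => a x || b x) l) <= length (filter a l) + length (filter b l))%nat.
Proof.
  induction l as [|x t IH]; simpl; auto.
  destruct (a x), (b x); simpl; lia.
Qed.

Lemma filter_cover_le : forall (U G : nat -> bool) (f : nat -> list (list nat)) (H : hgraph) l,
  (forall x, U x = true -> G x = true /\ exists e, In e (f x) /\ H e = true) ->
  (length (filter U l) <= length (filter H (flat_map f (filter G l))))%nat.
Proof.
  induction l as [|x t IH]; simpl; intros HU; auto.
  specialize (IH HU).
  destruct (U x) eqn:Ux.
  - destruct (HU x Ux) as [Gx [e [He1 He2]]]. rewrite Gx; simpl.
    rewrite filter_app, length_app.
    assert (0 < length (filter H (f x)))%nat.
    { destruct (filter H (f x)) eqn:E; simpl; [|lia].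
      assert (In e (filter H (f x))) by (apply filter_In; auto). rewrite E in H0; destruct H0. }
    lia.
  - destruct (G x); simpl; auto. rewrite filter_app, length_app. lia.
Qed.

Lemma NoDup_flat_map' : forall (A B : Type) (f : A -> list B) l, NoDup l ->
  (forall x, In x l -> NoDup (f x)) ->
  (forall x y e, In x l -> In y l -> x <> y -> In e (f x) -> In e (f y) -> False) ->
  NoDup (flat_map f l).
Proof.
  induction l as [|x t IH]; simpl; intros HN Hf Hd; [constructor|].
  inversion HN; subst.
  apply NoDup_app.
  - apply Hf; auto.
  - apply IH; auto. intros x0 y0 e0 ? ? ? ? ?; apply (Hd x0 y0 e0); auto.
  - intros e He1 He2. apply in_flat_map in He2. destruct He2 as [y [Hy He2]].
  apply (Hd x y e); auto. intro; subst; tauto.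
Qed.

Lemma NoDup_map_on : forall (A B : Type) (g : A -> B) l, NoDup l ->
  (forall x y, In x l -> In y l -> g x = g y -> x = y) -> NoDup (map g l).
Proof.
  induction l as [|x t IH]; simpl; intros HN Hg; constructor.
  - inversion HN; subst. intro Hin. apply in_map_iff in Hin. destruct Hin as [y [Hy1 Hy2]].
    assert (y = x) by (apply Hg; auto). subst; tauto.
  - inversion HN; subst. apply IH; auto.
Qed.

Lemma existsb_ext_in : forall (A : Type) (f g : A -> bool) l,
  (forall x, In x l -> f x = g x) -> existsb f l = existsb g l.
Proof.
  induction l as [|x t IH]; simpl; intros; auto. rewrite H by auto. rewrite IH; auto.
Qed.
Open Scope bool_scope.

Definition cnt n (P : nat -> bool) := length (filter P (seq 0 n)).
Definition cD (D : nat -> bool) (e : list nat) := length (filter D e).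
Definition fresh D e := (cD D e + 2 <= length e)%nat.
Definition fe v (Dl : list nat) u := srt [v;u] :: map (fun w => srt [v;u;w]) Dl.
Definition Ev n (Y D : nat -> bool) v :=
  flat_map (fe v (filter D (seq 0 n))) (filter (fun u => negb (Y u) && negb (D u)) (seq 0 n)).
Definition prE (P2 P3 : R) (e : list nat) := if Nat.eqb (length e) 2 then P2 else P3.
Definition Ufun n (H : hgraph) v (Y D : nat -> bool) u :=
  Nat.ltb u n && negb (Y u) && negb (D u) &&
  (H (srt [v; u]) || existsb (fun w => D w && H (srt [v; u; w])) (seq 0 n)).

Lemma step_eq : forall n H sel Y D, step n H sel Y D =
  (fun u => (Y u || Ufun n H (sel Y D) Y D u) && negb (Nat.eqb u (sel Y D)),
   fun u => D u || Nat.eqb u (sel Y D)).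
Proof. reflexivity. Qed.

Lemma Ev_mem : forall n Y D v e, In e (Ev n Y D v) ->
  exists u, (u < n)%nat /\ Y u = false /\ D u = false /\
   (e = srt [v;u] \/ exists w, (w < n)%nat /\ D w = true /\ e = srt [v;u;w]).
Proof.
  unfold Ev; intros n Y D v e H. apply in_flat_map in H. destruct H as [u [Hu He]].
  apply filter_In in Hu. destruct Hu as [Hu Hg]. apply andb_true_iff in Hg.
  destruct Hg as [Hg1 Hg2]. apply negb_true_iff in Hg1, Hg2. apply in_seq in Hu.
  exists u; repeat split; auto; try lia.
  destruct He as [He|He]; [left; auto|right].
  apply in_map_iff in He. destruct He as [w [<- Hw]]. apply filter_In in Hw.
  destruct Hw as [Hw1 Hw2]; apply in_seq in Hw1. exists w; repeat split; auto; lia.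
Qed.

Lemma cD_srt : forall D l, cD D (srt l) = cD D l.
Proof. intros; unfold cD; apply filter_perm_len, srt_perm. Qed.

Lemma Ev_univ_fresh : forall n Y D v e, (v < n)%nat -> Y v = true ->
  (forall u, Y u = true -> D u = false) -> In e (Ev n Y D v) ->
  In e (pairs n ++ triples n) /\ fresh D e.
Proof.
  intros n Y D v e Hv Yv Hdis He. pose proof (Hdis v Yv) as Dv.
  apply Ev_mem in He. destruct He as [u [Hu [Yu [Du [He|[w [Hw [Dw He]]]]]]]]; subst e.
  - assert (v <> u) by congruence. split.
    + apply in_or_app; left; apply srt2_univ; auto.
    + unfold fresh; rewrite cD_srt, srt_len; unfold cD; simpl; rewrite Dv, Du; simpl; lia.
  - assert (v <> u) by congruence. assert (v <> w) by congruence. assert (u <> w) by congruence.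
    split.
    + apply in_or_app; right; apply srt3_univ; auto.
    + unfold fresh; rewrite cD_srt, srt_len; unfold cD; simpl; rewrite Dv, Du, Dw; simpl; lia.
Qed.

Lemma Ev_notfresh : forall n Y D v e, In e (Ev n Y D v) ->
  ~ fresh (fun x => D x || Nat.eqb x v) e.
Proof.
  intros n Y D v e He. apply Ev_mem in He.
  destruct He as [u [Hu [Yu [Du [He|[w [Hw [Dw He]]]]]]]]; subst e;
  unfold fresh; rewrite cD_srt, srt_len; unfold cD; simpl; rewrite Nat.eqb_refl, orb_true_r; simpl.
  - destruct (D u || Nat.eqb u v); simpl; lia.
  - rewrite Dw; simpl. destruct (D u || Nat.eqb u v); simpl; lia.
Qed.

Lemma perm3 : forall v u w u' w' : nat, Permutation [v;u;w] [v;u';w'] -> Permutation [u;w] [u';w'].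
Proof. intros. apply Permutation_cons_inv in H; auto. Qed.

Lemma Ev_NoDup : forall n Y D v, Y v = true ->
  (forall u, Y u = true -> D u = false) -> NoDup (Ev n Y D v).
Proof.
  intros n Y D v Yv Hdis. pose proof (Hdis v Yv) as Dv. unfold Ev.
  apply NoDup_flat_map'.
  - apply NoDup_filter, seq_NoDup.
  - intros u Hu. unfold fe. constructor.
    + intro Hin. apply in_map_iff in Hin. destruct Hin as [w [Hw _]].
      apply (f_equal (@length nat)) in Hw. rewrite !srt_len in Hw. simpl in Hw; lia.
    + apply NoDup_map_on; [apply NoDup_filter, seq_NoDup|].
      intros x y _ _ Hxy. apply srt_inj, Permutation_cons_inv, Permutation_cons_inv in Hxy.
      apply Permutation_length_1 in Hxy; auto.
  - intros x y e Hx Hy Hxy Hex Hey.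
    apply filter_In in Hx, Hy. destruct Hx as [_ Hx], Hy as [_ Hy].
    apply andb_true_iff in Hx, Hy. destruct Hx as [_ Dx], Hy as [_ Dy].
    apply negb_true_iff in Dx, Dy.
    unfold fe in Hex, Hey.
    destruct Hex as [Hex|Hex]; destruct Hey as [Hey|Hey].
    + rewrite <- Hex in Hey. apply srt_inj, Permutation_cons_inv, Permutation_length_1 in Hey. auto.
    + apply in_map_iff in Hey. destruct Hey as [w [Hw _]]. rewrite <- Hex in Hw.
      apply (f_equal (@length nat)) in Hw. rewrite !srt_len in Hw. simpl in Hw; lia.
    + apply in_map_iff in Hex. destruct Hex as [w [Hw _]]. rewrite <- Hey in Hw.
      apply (f_equal (@length nat)) in Hw. rewrite !srt_len in Hw. simpl in Hw; lia.
    + apply in_map_iff in Hex, Hey. destruct Hex as [w [Hw Hwin]], Hey as [w' [Hw' Hw'in]].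
      apply filter_In in Hwin, Hw'in. destruct Hwin as [_ Dw], Hw'in as [_ Dw'].
      rewrite <- Hw' in Hw. apply srt_inj, perm3 in Hw.
      assert (Hin : In x [y; w']) by (eapply Permutation_in; [exact Hw|left; auto]).
      destruct Hin as [Hin|[Hin|[]]]; subst; congruence.
Qed.

Lemma sumpr_app : forall pr l1 l2, sumpr pr (l1 ++ l2) = sumpr pr l1 + sumpr pr l2.
Proof. induction l1; simpl; intros; [ring|rewrite IHl1; ring]. Qed.

Lemma sumpr_flat_map_le : forall pr (f : nat -> list (list nat)) l c, 0 <= c ->
  (forall x, In x l -> sumpr pr (f x) <= c) ->
  sumpr pr (flat_map f l) <= INR (length l) * c.
Proof.
  induction l as [|x t IH]; intros c Hc Hf; [simpl; lra|].
  change (flat_map f (x::t)) with (f x ++ flat_map f t).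
  change (length (x::t)) with (S (length t)).
  rewrite sumpr_app. rewrite S_INR.
  assert (Hf' : forall y, In y t -> sumpr pr (f y) <= c) by (intros; apply Hf; right; auto).
  assert (sumpr pr (f x) <= c) by (apply Hf; left; auto).
  assert (sumpr pr (flat_map f t) <= INR (length t) * c) by (apply IH; auto).
  lra.
Qed.

Lemma sumpr_cons : forall pr a l, sumpr pr (a :: l) = pr a + sumpr pr l.
Proof. reflexivity. Qed.

Lemma prE2 : forall P2 P3 a b, prE P2 P3 (srt [a;b]) = P2.
Proof. intros; unfold prE; rewrite srt_len; reflexivity. Qed.

Lemma prE3 : forall P2 P3 a b c, prE P2 P3 (srt [a;b;c]) = P3.
Proof. intros; unfold prE; rewrite srt_len; reflexivity. Qed.

Lemma sumpr_map3 : forall P2 P3 v u l,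
  sumpr (prE P2 P3) (map (fun w => srt [v; u; w]) l) = INR (length l) * P3.
Proof.
  induction l as [|w t IH]; [simpl; ring|].
  change (map (fun w => srt [v; u; w]) (w :: t)) with (srt [v;u;w] :: map (fun w => srt [v; u; w]) t).
  change (length (w :: t)) with (S (length t)).
  rewrite sumpr_cons, IH, prE3, S_INR; ring.
Qed.

Lemma Ev_sum : forall n Y D v P2 P3, 0 <= P2 -> 0 <= P3 ->
  sumpr (prE P2 P3) (Ev n Y D v) <= INR n * (P2 + INR (cnt n D) * P3).
Proof.
  intros n Y D v P2 P3 H2 H3. unfold Ev.
  eapply Rle_trans; [apply sumpr_flat_map_le with (c := P2 + INR (cnt n D) * P3)|].
  - pose proof (pos_INR (cnt n D)); nra.
  - intros u _. unfold fe.
    change (sumpr (prE P2 P3) (srt [v; u] :: map (fun w => srt [v; u; w]) (filter D (seq 0 n))))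
      with (prE P2 P3 (srt [v;u]) + sumpr (prE P2 P3) (map (fun w => srt [v; u; w]) (filter D (seq 0 n)))).
    rewrite prE2, sumpr_map3. unfold cnt. lra.
  - apply Rmult_le_compat_r.
    + pose proof (pos_INR (cnt n D)); nra.
    + apply le_INR. eapply Nat.le_trans; [apply filter_length_le|]. rewrite length_seq; lia.
Qed.

Lemma cnt_step : forall n H (sel : selector) Y D, (sel Y D < n)%nat -> Y (sel Y D) = true ->
  (cnt n (fst (step n H sel Y D)) + 1 <= cnt n Y + cntE (Ev n Y D (sel Y D)) H)%nat.
Proof.
  intros n H sel Y D Hv Yv. rewrite step_eq; simpl fst. set (v := sel Y D) in *.
  unfold cnt, cntE.
  eapply Nat.le_trans.
  { apply (filter_remove_lt (fun u => Y u || Ufun n H v Y D u)).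
    - apply in_seq; lia.
    - rewrite Yv; auto. }
  eapply Nat.le_trans; [apply filter_or_le|].
  apply Nat.add_le_mono_l. unfold Ev.
  apply filter_cover_le.
  intros u Hu. unfold Ufun in Hu. apply andb_true_iff in Hu. destruct Hu as [Hu1 Hu2].
  apply andb_true_iff in Hu1. destruct Hu1 as [Hu1 Du].
  apply andb_true_iff in Hu1. destruct Hu1 as [Hu1 Yu].
  split; [rewrite Yu, Du; auto|].
  apply orb_true_iff in Hu2. destruct Hu2 as [Hu2|Hu2].
  - exists (srt [v;u]); split; [left; auto|auto].
  - apply existsb_exists in Hu2. destruct Hu2 as [w [Hw Hw2]].
    apply andb_true_iff in Hw2. destruct Hw2 as [Dw Hw2].
    exists (srt [v;u;w]); split; auto. right. apply in_map_iff. exists w; split; auto.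
    apply filter_In; auto.
Qed.

Lemma step_local : forall n H H' (sel : selector) Y D,
  (forall e, In e (Ev n Y D (sel Y D)) -> H e = H' e) ->
  step n H sel Y D = step n H' sel Y D.
Proof.
  intros n H H' sel Y D Hag. rewrite !step_eq. f_equal. extensionality u.
  f_equal. f_equal. unfold Ufun. set (v := sel Y D) in *.
  destruct (Nat.ltb u n) eqn:E1; simpl; auto.
  destruct (Y u) eqn:E2; simpl; auto.
  destruct (D u) eqn:E3; simpl; auto.
  apply Nat.ltb_lt in E1.
  assert (Hu : In u (filter (fun u => negb (Y u) && negb (D u)) (seq 0 n))).
  { apply filter_In; split; [apply in_seq; lia|rewrite E2, E3; auto]. }
  rewrite Hag.
  2:{ unfold Ev; apply in_flat_map; exists u; split; auto; left; auto. }
  f_equal. apply existsb_ext_in. intros w Hw. destruct (D w) eqn:Dw; simpl; auto.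
  apply Hag. unfold Ev; apply in_flat_map; exists u; split; auto; right.
  apply in_map_iff; exists w; split; auto; apply filter_In; auto.
Qed.
Open Scope bool_scope.

Fixpoint surv n (H : hgraph) (sel : selector) k (Y D : nat -> bool) : bool :=
  match k with
  | O => true
  | S k => existsb Y (seq 0 n) &&
           surv n H sel k (fst (step n H sel Y D)) (snd (step n H sel Y D))
  end.

Fixpoint Sg (g : nat -> R) t k : R :=
  match k with O => 0 | S k => g t + Sg g (S t) k end.

Lemma exp_le_mono : forall x y, x <= y -> exp x <= exp y.
Proof. intros x y [H|H]; [left; apply exp_increasing; auto|subst; lra]. Qed.

Lemma cnt_eqb_le1 : forall v l, NoDup l -> (length (filter (fun u => Nat.eqb u v) l) <= 1)%nat.
Proof.
  induction l as [|x t IH]; simpl; intros HN; [lia|]. inversion HN; subst.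
  destruct (Nat.eqb_spec x v).
  - subst. assert (length (filter (fun u => Nat.eqb u v) t) = 0%nat).
    { clear -H1. induction t; simpl; auto. destruct (Nat.eqb_spec a v).
      - subst; simpl in H1; tauto.
      - apply IHt; simpl in H1; tauto. }
    simpl; lia.
  - apply IH; auto.
Qed.

Lemma prE_ok : forall P2 P3, 0 <= P2 <= 1 -> 0 <= P3 <= 1 -> forall e, 0 <= prE P2 P3 e <= 1.
Proof. intros; unfold prE; destruct (Nat.eqb _ _); auto. Qed.

Lemma main_lemma : forall n sel P2 P3 (th lam : nat -> R),
  valid_sel n sel -> 0 <= P2 <= 1 -> 0 <= P3 <= 1 ->
  (forall t, 0 <= th t /\ th (S t) <= th t) ->
  (forall t, INR n * (P2 + INR t * P3) <= lam t) ->
  forall k t Y D L acc,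
  (forall u, Y u = true -> D u = false) -> (cnt n D <= t)%nat -> NoDup L ->
  (forall e, In e (pairs n ++ triples n) -> fresh D e -> In e L) ->
  PA (mk (prE P2 P3) L) acc (fun H => if surv n H sel k Y D then 1 else 0)
   <= exp (th t * INR (cnt n Y) + Sg (fun s => (exp (th s) - 1) * lam s - th s) t k).
Proof.
  intros n sel P2 P3 th lam Hsel HP2 HP3 Hth Hlam.
  assert (Hpr := prE_ok P2 P3 HP2 HP3).
  induction k as [|k IH]; intros t Y D L acc Hdis HD HN Hcov.
  - simpl surv. rewrite PA_const. simpl Sg. rewrite Rplus_0_r.
    eapply Rle_trans; [|apply exp_ineq1_le]. pose proof (Hth t). pose proof (pos_INR (cnt n Y)). nra.
  - simpl surv. destruct (existsb Y (seq 0 n)) eqn:Ex.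
    2:{ simpl andb. rewrite PA_const. left; apply exp_pos. }
    simpl andb.
    apply existsb_exists in Ex. destruct Ex as [u0 [Hu0 Yu0]]. apply in_seq in Hu0.
    destruct (Hsel Y D) as [Hv Yv]; [exists u0; split; auto; lia|].
    set (v := sel Y D) in *.
    set (E := Ev n Y D v).
    assert (HEN : NoDup E) by (apply Ev_NoDup; auto).
    assert (HEL : forall e, In e E -> In e L).
    { intros e He. destruct (Ev_univ_fresh n Y D v e Hv Yv Hdis He); auto. }
    set (rest := filter (fun e => if in_dec ldec e E then false else true) L).
    assert (Hrest : forall e, In e rest <-> In e L /\ ~ In e E).
    { intro e; unfold rest; rewrite filter_In. destruct (in_dec ldec e E); split; intros [? ?]; try congruence; auto.
      }
    assert (HNr : NoDup rest) by (apply NoDup_filter; auto).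
    assert (HNEr : NoDup (E ++ rest)).
    { apply NoDup_app; auto. intros a Ha Ha'. apply Hrest in Ha'. tauto. }
    assert (HP : Permutation L (E ++ rest)).
    { apply NoDup_Permutation; auto. intro x; rewrite in_app_iff, Hrest.
      split; [intro; destruct (in_dec ldec x E); tauto|].
      intros [?|[? ?]]; auto. }
    rewrite (PA_perm _ (mk (prE P2 P3) (E ++ rest))).
    2:{ apply Permutation_map; auto. }
    2:{ rewrite map_fst_mk; auto. }
    unfold mk at 1; rewrite map_app; fold (mk (prE P2 P3) E); fold (mk (prE P2 P3) rest).
    rewrite PA_app.
    set (g := fun s => (exp (th s) - 1) * lam s - th s).
    set (C := exp (th t * (INR (cnt n Y) - 1) + Sg g (S t) k)).
    assert (Hinner : forall a, PA (mk (prE P2 P3) rest) a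
        (fun H => if surv n H sel k (fst (step n H sel Y D)) (snd (step n H sel Y D)) then 1 else 0)
        <= C * exp (th t * INR (cntE E a))).
    { intro a.
      rewrite (PA_ext_out _ a _ (fun H => if surv n H sel k (fst (step n a sel Y D)) (snd (step n a sel Y D)) then 1 else 0)).
      2:{ intros H HH. rewrite (step_local n H a sel Y D); auto.
          intros e He. apply HH. rewrite map_fst_mk. intro Her. apply Hrest in Her. tauto. }
      eapply Rle_trans.
      { apply (IH (S t)).
        - rewrite step_eq; simpl. intros u Hu. apply andb_true_iff in Hu. destruct Hu as [Hu1 Hu2].
          apply orb_true_iff in Hu1. apply negb_true_iff in Hu2. fold v in Hu2 |- *.
          rewrite Hu2, orb_false_r. destruct Hu1 as [Hu1|Hu1]; [auto|].
          unfold Ufun in Hu1. apply andb_true_iff in Hu1. destruct Hu1 as [Hu1 _].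
          apply andb_true_iff in Hu1. destruct Hu1 as [_ Hu1]. apply negb_true_iff; auto.
        - rewrite step_eq; simpl. unfold cnt in *.
          eapply Nat.le_trans; [apply (filter_or_le D (fun u => Nat.eqb u (sel Y D)))|].
          pose proof (cnt_eqb_le1 (sel Y D) (seq 0 n) (seq_NoDup n 0)). lia.
        - auto.
        - intros e HeU Hfr. rewrite step_eq in Hfr; simpl in Hfr. fold v in Hfr.
          apply Hrest. split.
          + apply Hcov; auto. unfold fresh in *. unfold cD in *.
            pose proof (filter_mono_len D (fun x => D x || Nat.eqb x v) e).
            assert (length (filter D e) <= length (filter (fun x => D x || Nat.eqb x v) e))%nat
              by (apply H; intros x Hx; rewrite Hx; auto). lia.
          + intro HeE. apply (Ev_notfresh n Y D v e HeE); auto. }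
      unfold C. rewrite <- exp_plus. apply exp_le_mono.
      pose proof (cnt_step n a sel Y D Hv Yv) as Hc. fold v E in Hc.
      apply le_INR in Hc. rewrite plus_INR, plus_INR in Hc. simpl (INR 1) in Hc.
      destruct (Hth t) as [Ht0 Ht1]. destruct (Hth (S t)) as [Ht2 _].
      pose proof (pos_INR (cnt n (fst (step n a sel Y D)))).
      fold g. nra. }
    eapply Rle_trans.
    { apply (PA_le_out _ acc _ (fun a => C * exp (th t * INR (cntE E a)))).
      - apply probs_ok_mk; auto.
      - intros H _. apply Hinner. }
    rewrite PA_scale, PA_prod by auto.
    destruct (Hth t) as [Ht0 _].
    eapply Rle_trans.
    { apply Rmult_le_compat_l; [unfold C; left; apply exp_pos|].
      apply prodf_le; auto. }
    unfold C. rewrite <- exp_plus. apply exp_le_mono. simpl Sg. fold g. unfold g at 2.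
    assert (Hs : sumpr (prE P2 P3) E <= lam t).
    { eapply Rle_trans; [apply Ev_sum; lra|]. eapply Rle_trans; [|apply Hlam].
      apply Rmult_le_compat_l; [apply pos_INR|]. apply Rplus_le_compat_l.
      apply Rmult_le_compat_r; [lra|]. apply le_INR; auto. }
    assert (1 <= exp (th t)) by (rewrite <- exp_0; apply exp_le_mono; auto).
    assert ((exp (th t) - 1) * sumpr (prE P2 P3) E <= (exp (th t) - 1) * lam t)
      by (apply Rmult_le_compat_l; lra).
    lra.
Qed.
Close Scope bool_scope.

Definition Gf (x : R) := x * ln x - x ^ 2 / 2.
Definition ff (x : R) := 1 - x + ln x.

Lemma ln_le_x1 : forall x, 0 < x -> ln x <= x - 1.
Proof. intros. pose proof (exp_ineq1_le (ln x)). rewrite exp_ln in H0 by auto. lra. Qed.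

Lemma ln_le_mono : forall x y, 0 < x -> x <= y -> ln x <= ln y.
Proof. intros x y Hx [H|H]; [left; apply ln_increasing; auto|subst; lra]. Qed.

Lemma tangent : forall a b, 0 < a -> 0 < b ->
  ff a * (b - a) <= Gf b - Gf a + (b - a) ^ 2 / 2.
Proof.
  intros a b Ha Hb. unfold ff, Gf.
  assert (H : ln (a / b) <= a / b - 1) by (apply ln_le_x1; apply Rdiv_lt_0_compat; auto).
  unfold Rdiv in H. rewrite ln_mult, ln_Rinv in H by (auto; apply Rinv_0_lt_compat; auto).
  assert (H2 : b * (ln a - ln b) <= a - b).
  { replace (a - b) with (b * (a * / b - 1)) by (field; lra).
    apply Rmult_le_compat_l; lra. }
  nra.
Qed.

Lemma telescope : forall (g lam : nat -> R) L r m,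
  0 < L -> 0 < r ->
  (forall s, lam (S s) = lam s + r / L) ->
  (forall s, (s < m)%nat -> 0 < lam s /\ g s <= ff (lam s)) ->
  forall k t, (t + k <= m)%nat ->
  Sg g t k <= (L / r) * (Gf (lam (t + k)%nat) - Gf (lam t)) + INR k * (r / (2 * L)).
Proof.
  intros g lam L r m HL Hr Hlam Hg.
  induction k as [|k IH]; intros t Htk.
  - simpl. rewrite Nat.add_0_r. lra.
  - change (Sg g t (S k)) with (g t + Sg g (S t) k).
    rewrite S_INR. replace (t + S k)%nat with (S t + k)%nat by lia.
    pose proof (IH (S t) ltac:(lia)) as IH'.
    destruct (Hg t ltac:(lia)) as [Hpos Hgt].
    assert (Hpos' : 0 < lam (S t)) by (rewrite Hlam; apply Rplus_lt_0_compat; auto; apply Rdiv_lt_0_compat; auto).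
    pose proof (tangent (lam t) (lam (S t)) Hpos Hpos') as Ht.
    assert (Hd : lam (S t) - lam t = r / L) by (rewrite Hlam; ring). rewrite Hd in Ht.
    assert (Hff : ff (lam t) <= (L / r) * (Gf (lam (S t)) - Gf (lam t)) + r / (2 * L)).
    { assert (E : ff (lam t) = (L / r) * (ff (lam t) * (r / L))) by (field; lra).
      rewrite E.
      assert (E2 : r / (2 * L) = (L / r) * ((r / L) ^ 2 / 2)) by (field; lra).
      rewrite E2. rewrite <- Rmult_plus_distr_l.
      apply Rmult_le_compat_l; [left; apply Rdiv_lt_0_compat; auto|lra]. }
    lra.
Qed.

Lemma eta_choice : forall eps r delta, 0 < eps <= 1 -> 0 < r -> 0 < delta ->
  exists eta, 0 < eta /\ eta <= eps / 2 /\
    Gf (1 - eps) - Gf (1 - eps + eta) <= r * delta / 4.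
Proof.
  intros eps r delta [He0 He1] Hr Hd.
  destruct (Req_dec eps 1) as [E1|E1].
  - subst eps. set (z := Rmin (1/2) (r * delta / 10)).
    assert (Hz0 : 0 < z) by (apply Rmin_glb_lt; lra || (apply Rdiv_lt_0_compat; nra)).
    assert (Hz1 : z <= 1/2) by apply Rmin_l.
    assert (Hz2 : z <= r * delta / 10) by apply Rmin_r.
    exists (z ^ 2). split; [nra|split; [nra|]].
    replace (1 - 1) with 0 by ring. replace (0 + z^2) with (z^2) by ring.
    assert (G0 : Gf 0 = 0) by (unfold Gf; rewrite Rmult_0_l; simpl; field). rewrite G0. unfold Gf.
    rewrite ln_pow by auto. simpl INR.
    assert (Hl : - ln z <= 1 / z).
    { pose proof (ln_le_x1 (/ z) ltac:(apply Rinv_0_lt_compat; auto)).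
      rewrite ln_Rinv in H by auto. unfold Rdiv. lra. }
    assert (Hl2 : - (z ^ 2 * ln z) <= z).
    { assert (z ^ 2 * (- ln z) <= z ^ 2 * (1 / z)) by (apply Rmult_le_compat_l; nra).
      replace (z ^ 2 * (1 / z)) with z in H by (field; lra). lra. }
    assert (A1 : z * z <= z) by nra.
    assert (A2 : z * z * (z * z) <= z * z * 1) by (apply Rmult_le_compat_l; nra).
    assert ((z ^ 2) ^ 2 <= z) by (simpl; nra).
    replace (0 - (z ^ 2 * ((1 + 1) * ln z) - (z ^ 2) ^ 2 / 2))
      with (2 * (- (z ^ 2 * ln z)) + (z ^ 2) ^ 2 / 2) by ring.
    nra.
  - set (a0 := 1 - eps). assert (Ha0 : 0 < a0) by (unfold a0; lra).
    set (C := a0 - 1 - ln a0).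
    assert (HC : 0 <= C) by (unfold C; pose proof (ln_le_x1 a0 Ha0); lra).
    set (eta := Rmin (eps / 2) (r * delta / (4 * (C + 1)))).
    assert (Hq : 0 < r * delta / (4 * (C + 1))) by (apply Rdiv_lt_0_compat; nra).
    assert (H0 : 0 < eta) by (apply Rmin_glb_lt; lra).
    assert (H1 : eta <= eps / 2) by apply Rmin_l.
    assert (H2 : eta <= r * delta / (4 * (C + 1))) by apply Rmin_r.
    exists eta; split; auto; split; auto.
    pose proof (tangent a0 (a0 + eta) Ha0 ltac:(lra)) as T.
    replace (a0 + eta - a0) with eta in T by ring.
    unfold ff in T. fold a0.
    assert (eta * (C + 1) <= r * delta / 4).
    { apply (Rmult_le_compat_r (C + 1)) in H2; [|lra].
      replace (r * delta / (4 * (C + 1)) * (C + 1)) with (r * delta / 4) in H2 by (field; lra). lra. }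
    assert (eta <= 1) by lra.
    unfold C in *. nra.
Qed.

Lemma run_surv : forall n H sel k fuel Y D t, (t + k <= run n H sel fuel Y D t)%nat ->
  surv n H sel k Y D = true.
Proof.
  induction k as [|k IH]; intros fuel Y D t Hr; simpl; auto.
  destruct fuel as [|f]; simpl in Hr; [lia|].
  destruct (existsb Y (seq 0 n)); simpl; [|lia].
  apply (IH f _ _ (S t)). lia.
Qed.

Lemma Gprob_PA : forall n P2 P3 ev, Gprob n P2 P3 ev =
  PA (mk (prE P2 P3) (nodup ldec (pairs n ++ triples n))) (fun _ => false)
     (fun H => if ev H then 1 else 0).
Proof.
  intros. unfold Gprob. rewrite prob_aux_PA, PA_dedup. f_equal.
  unfold mk. rewrite map_app. f_equal; apply map_ext_in; intros e He; unfold prE.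
  - rewrite (pairs_len n e He); auto.
  - rewrite (triples_len n e He); auto.
Qed.

Lemma cnt_false : forall n, cnt n (fun _ => false) = 0%nat.
Proof. intros; unfold cnt; induction (seq 0 n); simpl; auto. Qed.

Lemma floor_nat : forall x, 0 <= x -> exists m : nat, INR m <= x /\ x < INR m + 1.
Proof.
  intros x Hx. destruct (base_Int_part x) as [H1 H2].
  assert (Hz : (0 <= Int_part x)%Z).
  { assert (-1 < IZR (Int_part x)) by lra. apply lt_IZR in H. lia. }
  exists (Z.to_nat (Int_part x)). rewrite INR_IZR_INZ, Z2Nat.id by auto. lra.
Qed.

Lemma big_nat : forall x, exists N : nat, forall n, (N <= n)%nat -> x < INR n.
Proof.
  intros x. destruct (floor_nat (Rmax 0 x) (Rmax_l _ _)) as [N [_ HN]].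
  exists (S N). intros n Hn. apply le_INR in Hn. rewrite S_INR in Hn.
  pose proof (Rmax_r 0 x). lra.
Qed.

Theorem corollary1 :
  forall eps r : R, 0 < eps <= 1 -> 0 < r ->
  forall delta : R, 0 < delta ->
  exists N : nat, forall n : nat, (N <= n)%nat ->
    forall sel : selector, valid_sel n sel ->
    forall v1 v2 : nat, (v1 < n)%nat -> (v2 < n)%nat -> v1 <> v2 ->
      Gprob n (p2 eps n) (p3 r n) (big_event eps r n sel v1 v2)
        <= Rpower (INR n) (Ier eps r + delta).
Proof.
  intros eps r [He0 He1] Hr delta Hd.
  destruct (eta_choice eps r delta (conj He0 He1) Hr Hd) as [eta [Hη0 [Hη1 Hη2]]].
  set (a := 1 - eps + eta).
  assert (Ha0 : 0 < a) by (unfold a; lra).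
  assert (Ha1 : a < 1) by (unfold a; lra).
  assert (Hla : ln a < 0) by (rewrite <- ln_1; apply ln_increasing; lra).
  set (L0 := Rmax 1 ((3/2 - 2 * ln a) * 4 / (3 * delta))).
  destruct (big_nat (Rmax (exp L0) r)) as [N HN]. exists N.
  intros n Hn sel Hsel v1 v2 Hv1 Hv2 Hv12.
  specialize (HN n Hn).
  pose proof (Rmax_l (exp L0) r) as HnE. pose proof (Rmax_r (exp L0) r) as Hnr.
  set (L := ln (INR n)).
  assert (HnE' : exp L0 < INR n) by lra.
  assert (HL0 : L0 < L).
  { rewrite <- (ln_exp L0). apply ln_increasing; auto. apply exp_pos. }
  assert (HL01 : 1 <= L0) by apply Rmax_l.
  assert (HL02 : (3/2 - 2 * ln a) * 4 / (3 * delta) <= L0) by apply Rmax_r.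
  assert (HL1 : 1 < L) by lra.
  assert (Hnpos : 0 < INR n) by (pose proof (exp_pos L0); lra).
  assert (Hn0 : n <> 0%nat) by (intro; subst; simpl in Hnpos; lra).
  assert (Hn1 : 1 <= INR n) by (change 1 with (INR 1); apply le_INR; lia).
  set (c := (eps - eta) / r).
  assert (Hc0 : 0 <= c) by (unfold c; apply Rmult_le_pos; [lra|left; apply Rinv_0_lt_compat; auto]).
  assert (Hcr : c * r = eps - eta) by (unfold c; field; lra).
  destruct (floor_nat (c * L)) as [m [Hm1 Hm2]]; [nra|].
  set (P2 := p2 eps n). set (P3 := p3 r n).
  set (lam := fun s : nat => a + r * INR s / L).
  set (th := fun s : nat => - ln (Rmin 1 (lam s))).
  assert (Hlampos : forall s, 0 < lam s).
  { intro s; unfold lam. pose proof (pos_INR s).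
    assert (0 <= r * INR s / L) by (apply Rmult_le_pos; [nra|left; apply Rinv_0_lt_compat; lra]). lra. }
  assert (HlamS : forall s, lam (S s) = lam s + r / L).
  { intro s; unfold lam; rewrite S_INR; field; lra. }
  assert (Hth : forall t, 0 <= th t /\ th (S t) <= th t).
  { intro t; unfold th. pose proof (Hlampos t); pose proof (Hlampos (S t)).
    assert (0 < Rmin 1 (lam t)) by (apply Rmin_glb_lt; lra).
    assert (0 < Rmin 1 (lam (S t))) by (apply Rmin_glb_lt; lra).
    split.
    - assert (ln (Rmin 1 (lam t)) <= ln 1) by (apply ln_le_mono; auto; apply Rmin_l).
      rewrite ln_1 in H3; lra.
    - assert (ln (Rmin 1 (lam t)) <= ln (Rmin 1 (lam (S t)))); [|lra].
      apply ln_le_mono; auto. apply Rmin_glb; [apply Rmin_l|].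
      eapply Rle_trans; [apply Rmin_r|]. rewrite HlamS.
      assert (0 < r / L) by (apply Rdiv_lt_0_compat; lra). lra. }
  assert (HP2 : 0 <= P2 <= 1).
  { unfold P2, p2. assert (0 < / INR n <= 1).
    { split; [apply Rinv_0_lt_compat; auto|]. rewrite <- Rinv_1. apply Rinv_le_contravar; lra. }
    unfold Rdiv; split; nra. }
  assert (HnL : r <= INR n * L) by nra.
  assert (HP3 : 0 <= P3 <= 1).
  { unfold P3, p3. fold L. split.
    - left; apply Rdiv_lt_0_compat; nra.
    - apply Rmult_le_reg_r with (INR n * L); [nra|].
      unfold Rdiv; rewrite Rmult_assoc, Rinv_l by nra. lra. }
  assert (Hlamb : forall t, INR n * (P2 + INR t * P3) <= lam t).
  { intro t. unfold P2, P3, p2, p3, lam. fold L.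
    replace (INR n * ((1 - eps) / INR n + INR t * (r / (INR n * L))))
      with ((1 - eps) + r * INR t / L) by (field; lra).
    unfold a; lra. }
  set (Y0 := fun u => (Nat.eqb u v1 || Nat.eqb u v2)%bool).
  set (D0 := fun _ : nat => false).
  pose proof (main_lemma n sel P2 P3 th lam Hsel HP2 HP3 Hth Hlamb m 0 Y0 D0
    (nodup ldec (pairs n ++ triples n)) (fun _ => false)) as Hmain.
  specialize (Hmain (fun u _ => eq_refl)).
  rewrite cnt_false in Hmain. specialize (Hmain (Nat.le_refl 0) (NoDup_nodup _ _)).
  specialize (Hmain ltac:(intros e He _; apply nodup_In; auto)).
  rewrite Gprob_PA. fold P2 P3.
  eapply Rle_trans.
  { apply (PA_le_out _ _ _ (fun H => if surv n H sel m Y0 D0 then 1 else 0)).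
    - apply probs_ok_mk, prE_ok; auto.
    - intros H _. unfold big_event.
      destruct (Rle_dec (K0 eps r * ln (INR n)) (INR (comp_size n H sel v1 v2))) as [Hb|Hb].
      + assert (Hsv : surv n H sel m Y0 D0 = true).
        { apply (run_surv n H sel m (S n) Y0 D0 0). simpl plus.
          apply INR_le. fold L in Hb. unfold comp_size in Hb.
          eapply Rle_trans; [exact Hm1|]. eapply Rle_trans; [|exact Hb].
          apply Rmult_le_compat_r; [lra|].
          unfold K0. eapply Rle_trans; [|apply Rmax_r].
          unfold c. unfold Rdiv. apply Rmult_le_compat_r; [left; apply Rinv_0_lt_compat; auto|lra]. }
        rewrite Hsv; lra.
      + destruct (surv n H sel m Y0 D0); lra. }
  eapply Rle_trans; [apply Hmain|].
  unfold Rpower. apply exp_le_mono. fold L.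
  assert (HY0 : INR (cnt n Y0) <= 2).
  { assert (cnt n Y0 <= 2)%nat.
    { unfold cnt, Y0. eapply Nat.le_trans; [apply filter_or_le|].
      pose proof (cnt_eqb_le1 v1 (seq 0 n) (seq_NoDup n 0)).
      pose proof (cnt_eqb_le1 v2 (seq 0 n) (seq_NoDup n 0)). lia. }
    apply le_INR in H; simpl in H; lra. }
  assert (Hlam0 : lam 0%nat = a) by (unfold lam; simpl INR; unfold Rdiv; rewrite Rmult_0_r, Rmult_0_l, Rplus_0_r; auto).
  assert (Hth0 : th 0%nat = - ln a) by (unfold th; rewrite Hlam0, Rmin_right by lra; auto).
  destruct (Hth 0%nat) as [Hth00 _].
  assert (Hlamm : lam m <= 1).
  { unfold lam. assert (r * INR m / L <= eps - eta); [|unfold a; lra].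
    apply Rmult_le_reg_r with L; [lra|]. unfold Rdiv; rewrite Rmult_assoc, Rinv_l by lra.
    nra. }
  assert (Hlamm2 : 1 - r / L < lam m).
  { unfold lam. assert (eps - eta - r / L < r * INR m / L); [|unfold a; lra].
    apply Rmult_lt_reg_r with L; [lra|]. unfold Rdiv.
    rewrite Rmult_assoc, Rinv_l by lra. rewrite Rmult_minus_distr_r, Rmult_assoc, Rinv_l by lra.
    nra. }
  assert (Hg : forall s, (s < m)%nat -> 0 < lam s /\
      (fun s => (exp (th s) - 1) * lam s - th s) s <= ff (lam s)).
  { intros s Hs. split; auto. cbv beta.
    assert (Hls : lam s <= 1).
    { eapply Rle_trans; [|exact Hlamm]. unfold lam.
      apply Rplus_le_compat_l. unfold Rdiv. apply Rmult_le_compat_r; [left; apply Rinv_0_lt_compat; lra|].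
      apply Rmult_le_compat_l; [lra|]. left; apply lt_INR; auto. }
    assert (Hts : th s = - ln (lam s)) by (unfold th; rewrite Rmin_right by lra; auto).
    rewrite Hts, exp_Ropp, exp_ln by auto. unfold ff. right. field.
    pose proof (Hlampos s); lra. }
  pose proof (telescope (fun s => (exp (th s) - 1) * lam s - th s) lam L r m
     ltac:(lra) Hr HlamS Hg m 0%nat ltac:(lia)) as Htel.
  rewrite Nat.add_0_l, Hlam0 in Htel.
  assert (T1 : th 0%nat * INR (cnt n Y0) <= 2 * (- ln a)) by (rewrite <- Hth0; nra).
  assert (T2 : Gf (lam m) <= -1/2 + r / L).
  { unfold Gf. pose proof (Hlampos m).
    assert (ln (lam m) <= 0) by (rewrite <- ln_1; apply ln_le_mono; lra).
    assert (lam m * ln (lam m) <= 0) by nra. nra. }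
  assert (T3 : Gf (1 - eps) - r * delta / 4 <= Gf a) by (unfold a; lra).
  assert (T4 : INR m * (r / (2 * L)) <= 1/2).
  { apply Rle_trans with (c * L * (r / (2 * L))).
    - apply Rmult_le_compat_r; auto. left; apply Rdiv_lt_0_compat; lra.
    - replace (c * L * (r / (2 * L))) with ((c * r) / 2) by (field; lra). lra. }
  set (Lr := L / r).
  assert (HLr : 0 < Lr) by (unfold Lr; apply Rdiv_lt_0_compat; lra).
  assert (T5 : Lr * (Gf (lam m) - Gf a) <= Lr * ((-1/2 + r / L) - (Gf (1 - eps) - r * delta / 4)))
    by (apply Rmult_le_compat_l; lra).
  assert (I1 : Lr * (r / L) = 1) by (unfold Lr; field; lra).
  assert (I2 : Lr * (r * delta / 4) = L * delta / 4) by (unfold Lr; field; lra).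
  assert (I3 : Ier eps r * L = Lr * (-1/2 - Gf (1 - eps))) by (unfold Ier, Gf, Lr; field; lra).
  assert (I4 : 3/2 - 2 * ln a <= 3 * delta / 4 * L).
  { assert (X : (3/2 - 2 * ln a) * 4 / (3 * delta) <= L) by lra.
    apply (Rmult_le_compat_r (3 * delta / 4)) in X; [|lra].
    replace ((3/2 - 2 * ln a) * 4 / (3 * delta) * (3 * delta / 4)) with (3/2 - 2 * ln a) in X by (field; lra).
    lra. }
  rewrite Rmult_plus_distr_r, I3.
  set (A := Lr * (Gf (lam m) - Gf a)) in *.
  set (B := Lr * (-1/2 - Gf (1 - eps))).
  assert (T6 : Lr * ((-1/2 + r / L) - (Gf (1 - eps) - r * delta / 4)) = B + 1 + L * delta / 4)
    by (unfold B; rewrite <- I1, <- I2; ring).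
  rewrite T6 in T5. change (L / r * (Gf (lam m) - Gf a)) with A in Htel. clearbody A B. clear -T1 T5 Htel T4 I4.
  lra.
Qed.
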